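(* Let $\mathfrak s$ be a finite-dimensional real solvable Lie algebra with an abelian complex structure $J$, and suppose $\mathfrak s=\mathfrak u+J\mathfrak u$ for some abelian ideal $\mathfrak u$ of $\mathfrak s$. Let $\mathfrak z$ be the center of $\mathfrak s$ (which is $J$-stable). Then $(\mathfrak s/\mathfrak z, J)$, with the induced complex structure, is holomorphically isomorphic to $(\mathfrak{aff}(A),J_{\mathrm{aff}})$ for some finite-dimensional real commutative associative algebra $A$, where $J_{\mathrm{aff}}(a,b)=(b,-a)$.
   Context: An abelian complex structure on a real Lie algebra $\mathfrak g$ is a linear map $J$ with $J^2=-\mathrm{Id}$ and $[Jx,Jy]=[x,y]$ for all $x,y\in\mathfrak g$. For a commutative associative algebra $A$, $\mathfrak{aff}(A)$ is the Lie algebra $A\oplus A$ with bracket $[(a,b),(a',b')]=(aa'-a'a,\ ab'-a'b)=(0,ab'-a'b)$. A holomorphic isomorphism between $(\mathfrak g_1,J_1)$ and $(\mathfrak g_2,J_2)$ is a Lie algebra isomorphism $f$ with $f J_1=J_2 f$. *)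

(* Defs.v *)
From HB Require Import structures.
From mathcomp Require Import all_boot all_order all_algebra.
From mathcomp Require Import reals.
Set Implicit Arguments. Unset Strict Implicit. Unset Printing Implicit Defensive.
Import Order.TTheory GRing.Theory Num.Theory.
Local Open Scope ring_scope.

Section LieDefs.
Variables (R : fieldType) (V : vectType R).

Definition bilinear_op (br : V -> V -> V) : Prop :=
  (forall (a : R) (x y z : V), br (a *: x + y) z = a *: br x z + br y z) /\
  (forall (a : R) (x y z : V), br z (a *: x + y) = a *: br z x + br z y).

Definition is_lie_bracket (br : V -> V -> V) : Prop :=
  [/\ bilinear_op br,
      (forall x, br x x = 0) &
      (forall x y z, br x (br y z) + br y (br z x) + br z (br x y) = 0)].

Definition lie_comm (br : V -> V -> V) (U W : {vspace V}) : {vspace V} :=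
  (<<[seq br u w | u <- vbasis U, w <- vbasis W]>>)%VS.

Definition derived (br : V -> V -> V) (k : nat) : {vspace V} :=
  iter k (fun U => lie_comm br U U) fullv.

Definition lie_solvable (br : V -> V -> V) : Prop :=
  exists k, derived br k = 0%VS.

Definition is_linear (J : V -> V) : Prop :=
  forall (a : R) (x y : V), J (a *: x + y) = a *: J x + J y.

Definition abelian_complex_structure (br : V -> V -> V) (J : V -> V) : Prop :=
  [/\ is_linear J, (forall x, J (J x) = - x) &
      (forall x y, br (J x) (J y) = br x y)].

Definition abelian_ideal (br : V -> V -> V) (U : {vspace V}) : Prop :=
  (forall u v, u \in U -> v \in U -> br u v = 0) /\
  (forall x u, u \in U -> br x u \in U).

Definition in_center (br : V -> V -> V) (x : V) : Prop := forall y, br x y = 0.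

End LieDefs.

(* A finite-dimensional (not necessarily unital) commutative associative
   R-algebra: a vectType A with a bilinear, commutative, associative product. *)
Definition is_comm_assoc_product (R : fieldType) (A : vectType R)
  (m : A -> A -> A) : Prop :=
  [/\ bilinear_op m, (forall a b, m a b = m b a) &
      (forall a b c, m a (m b c) = m (m a b) c)].

Definition aff_bracket (R : fieldType) (A : vectType R) (m : A -> A -> A)
  (p q : A * A) : A * A := (0, m p.1 q.2 - m q.1 p.2).

Definition J_aff (R : fieldType) (A : vectType R) (p : A * A) : A * A :=
  (p.2, - p.1).

(* Main.v *)
Require Import Defs.
From HB Require Import structures.
From mathcomp Require Import all_boot all_order all_algebra.
From mathcomp Require Import reals.
Import GRing.Theory.
Local Open Scope ring_scope.
Set Implicit Arguments.

Section LinF.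
Variables (K : fieldType) (aT rT : vectType K) (f : aT -> rT).
Hypothesis flin : linear f.
HB.instance Definition _ := GRing.isLinear.Build K aT rT *:%R f flin.
Lemma linfunE' : linfun f =1 f. Proof. exact: lfunE. Qed.
End LinF.

Section Main.
Variables (R : fieldType) (V : vectType R) (br : V -> V -> V) (J : V -> V) (U : {vspace V}).
Hypotheses (Hlie : is_lie_bracket br) (Hacs : abelian_complex_structure br J)
  (HU : abelian_ideal br U).

Lemma brr_lin x : linear (br x).
Proof. by case: Hlie => -[_ H] _ _ a y z; rewrite H. Qed.
HB.instance Definition _ x := GRing.isLinear.Build R V V *:%R (br x) (brr_lin x).

Lemma J_lin : linear J.
Proof. by case: Hacs => H _ _ a y z; rewrite H. Qed.
HB.instance Definition _ := GRing.isLinear.Build R V V *:%R J J_lin.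

Lemma JJ x : J (J x) = - x. Proof. by case: Hacs. Qed.
Lemma brJJ x y : br (J x) (J y) = br x y. Proof. by case: Hacs. Qed.
Lemma brxx x : br x x = 0. Proof. by case: Hlie. Qed.
Lemma jacobi x y z : br x (br y z) + br y (br z x) + br z (br x y) = 0.
Proof. by case: Hlie. Qed.

Lemma brDl x y z : br (x + y) z = br x z + br y z.
Proof. case: Hlie => -[H _] _ _; have := H 1 x y z; rewrite !scale1r. by []. Qed.

Lemma skew x y : br x y = - br y x.
Proof.
have := brxx (x + y); rewrite brDl !linearD /= !brxx add0r addr0.
by move/eqP; rewrite addr_eq0 => /eqP.
Qed.

Lemma brZDl a x y z : br (a *: x + y) z = a *: br x z + br y z.
Proof. by rewrite skew linearP /= opprD -scalerN -!skew. Qed.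
Lemma brNl x y : br (- x) y = - br x y.
Proof. by rewrite skew linearN /= opprK [br y x]skew. Qed.
Lemma brBl x y z : br (x - y) z = br x z - br y z.
Proof. by rewrite brDl brNl. Qed.
Lemma br0l y : br 0 y = 0.
Proof. by rewrite skew linear0 oppr0. Qed.

Definition central x := forall y, br x y = 0.

Lemma centralJ z : central z -> central (J z).
Proof. by move=> Hz y; rewrite -brJJ JJ brNl Hz oppr0. Qed.

Lemma comm_dot u v : br (J u) v = br (J v) u.
Proof. by rewrite -brJJ JJ brNl skew opprK. Qed.

Lemma UU {u v} : u \in U -> v \in U -> br u v = 0.
Proof. by case: HU => H _; apply: H. Qed.
Lemma Uid x u : u \in U -> br x u \in U.
Proof. by case: HU => _ H; apply: H. Qed.

Lemma lcomm_dot u v w : u \in U -> v \in U ->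
  br (J u) (br (J v) w) = br (J v) (br (J u) w).
Proof.
move=> Hu Hv; have := jacobi (J u) (J v) w.
rewrite brJJ (UU Hu Hv) linear0 addr0 (skew w) linearN /=.
by move/eqP; rewrite subr_eq0 => /eqP.
Qed.

Hypothesis Hdec : forall x : V, exists2 u1, u1 \in U & exists2 u2, u2 \in U & x = u1 + J u2.

Lemma central_of_U u : u \in U -> (forall v, v \in U -> br (J v) u = 0) -> central u.
Proof.
move=> Hu H y; have [v1 Hv1 [v2 Hv2 ->]] := Hdec y.
by rewrite linearD /= (UU Hu Hv1) add0r skew H ?oppr0.
Qed.

Lemma central_dec u1 u2 : u1 \in U -> u2 \in U -> central (u1 + J u2) ->
  central u1 /\ central u2.
Proof.
move=> H1 H2 Hc; split; apply: central_of_U => // v Hv.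
  have := Hc (J v); rewrite brDl brJJ (UU H2 Hv) addr0 skew => /eqP.
  by rewrite oppr_eq0 => /eqP.
have := Hc v; rewrite brDl (UU H1 Hv) add0r comm_dot //.
Qed.


Definition ad x : 'End(V) := linfun (br x).

Lemma ad_lin : linear ad.
Proof.
move=> a x y; apply/lfunP => w.
by rewrite add_lfunE scale_lfunE !lfunE /= brZDl.
Qed.

Definition Zc : {vspace V} := lker (linfun ad).

Lemma memZ x : (x \in Zc) <-> central x.
Proof.
rewrite /Zc memv_ker linfunE'; last exact: ad_lin.
split => [/eqP H y | H].
  by have := congr1 (fun f : 'End(V) => f y) H; rewrite /= zero_lfunE lfunE.
by apply/eqP/lfunP => y; rewrite zero_lfunE lfunE /= H.
Qed.

Definition Kc : {vspace V} := (U :&: Zc)%VS.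

Lemma memK u : (u \in Kc) <-> (u \in U /\ central u).
Proof.
by split => [/memv_capP [H1 /memZ H2] // | [H1 H2]]; apply/memv_capP; split => //; apply/memZ.
Qed.

Definition W : {vspace V} := (U :\: Kc)%VS.
Definition p1 : 'End(V) := addv_pi1 U Kc.
Definition p2 : 'End(V) := addv_pi2 U Kc.
Definition pi (u : V) : subvs_of W := vsproj W (p1 u).

Lemma pi_lin : linear pi.
Proof. by move=> a x y; rewrite /pi !linearP. Qed.
HB.instance Definition _ := GRing.isLinear.Build R V (subvs_of W) *:%R pi pi_lin.

Lemma p1p2 u : u \in U -> p1 u + p2 u = u.
Proof.
move=> Hu; apply: addv_pi1_pi2.
by have := memv_add Hu (mem0v Kc); rewrite addr0.
Qed.

Lemma p2K u : p2 u \in Kc. Proof. exact: memv_pi2. Qed.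

Lemma valpi u : vsval (pi u) = p1 u.
Proof. by rewrite /pi vsprojK //; apply: memv_pi. Qed.

Lemma p1E u : u \in U -> p1 u = u - p2 u.
Proof. by move=> Hu; rewrite -{2}(p1p2 Hu) addrK. Qed.

Lemma piK u : u \in Kc -> pi u = 0.
Proof.
move=> Hu; apply: subvs_inj; rewrite valpi linear0 p1E.
  by rewrite /p2 addv_pi2_id // subrr.
by case/memK: Hu.
Qed.

Lemma pi0K u : u \in U -> pi u = 0 -> u \in Kc.
Proof.
move=> Hu H; have := valpi u; rewrite H linear0 => /esym H1.
by rewrite -(p1p2 Hu) H1 add0r p2K.
Qed.

Lemma pi_val w : pi (vsval w) = w.
Proof.
apply: subvs_inj; rewrite valpi /p1 /addv_pi1 daddv_pi_id //.
  exact: capv_diff.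
exact: subvsP.
Qed.

Definition mA (a b : subvs_of W) : subvs_of W := pi (br (J (vsval a)) (vsval b)).

Lemma mA_pi u v : u \in U -> v \in U -> mA (pi u) (pi v) = pi (br (J u) v).
Proof.
move=> Hu Hv; rewrite /mA !valpi !p1E //.
have [_ c1] := (memK (p2 u)).1 (p2K u).
have [_ c2] := (memK (p2 v)).1 (p2K v).
rewrite [J (u - _)]linearB /= brBl !linearB /= (centralJ c1) (skew _ (p2 v)) c2.
by rewrite ?(centralJ c1) ?linear0 ?oppr0 ?subr0 ?sub0r ?addr0 ?opprK.
Qed.

Lemma W_U (w : subvs_of W) : vsval w \in U.
Proof. exact: (subvP (diffvSl U Kc)) (subvsP w). Qed.

Lemma mA_comm a b : mA a b = mA b a.
Proof. by rewrite /mA comm_dot. Qed.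

Lemma mA_assoc a b c : mA a (mA b c) = mA (mA a b) c.
Proof.
rewrite -(pi_val a) -(pi_val b) -(pi_val c).
have Ha := W_U a; have Hb := W_U b; have Hc := W_U c.
rewrite !mA_pi ?Uid //; congr pi.
by rewrite [br (J (br _ _)) _]comm_dot (lcomm_dot _ Hc Ha) (comm_dot (vsval c)).
Qed.

Lemma mA_bil : bilinear_op mA.
Proof.
split => a x y z; rewrite /mA.
  by rewrite [vsval (_ + _)]linearP [J _]linearP /= brZDl linearP.
by rewrite [vsval (_ + _)]linearP [br _ _]linearP /= linearP.
Qed.

Lemma exP x : exists p : V * V, [&& p.1 \in U, p.2 \in U & x == p.1 + J p.2].
Proof.
have [u1 H1 [u2 H2 E]] := Hdec x; exists (u1, u2); rewrite /= H1 H2 E eqxx //.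
Qed.

Definition dec x := xchoose (exP x).
Definition fmap x : subvs_of W * subvs_of W := (pi (dec x).2, pi (dec x).1).

Lemma decP x : [/\ (dec x).1 \in U, (dec x).2 \in U & x = (dec x).1 + J (dec x).2].
Proof. by have /and3P [H1 H2 /eqP H3] := xchooseP (exP x). Qed.

Lemma central0 : central 0.
Proof. by move=> y; rewrite br0l. Qed.

Lemma wd u1 u2 v1 v2 : u1 \in U -> u2 \in U -> v1 \in U -> v2 \in U ->
  u1 + J u2 = v1 + J v2 -> pi u1 = pi v1 /\ pi u2 = pi v2.
Proof.
move=> H1 H2 H3 H4 E.
have Hc : central ((u1 - v1) + J (u2 - v2)).
  have -> : (u1 - v1) + J (u2 - v2) = 0.
    by rewrite linearB /= addrACA -opprD E subrr.
  exact: central0.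
have Hu1 : u1 - v1 \in U by rewrite memvB.
have Hu2 : u2 - v2 \in U by rewrite memvB.
have [c1 c2] := central_dec Hu1 Hu2 Hc.
have /piK := (memK (u1 - v1)).2 (conj Hu1 c1).
have /piK := (memK (u2 - v2)).2 (conj Hu2 c2).
rewrite !linearB /= => /eqP; rewrite subr_eq0 => /eqP ->.
by move/eqP; rewrite subr_eq0 => /eqP ->.
Qed.

Lemma fE u1 u2 : u1 \in U -> u2 \in U -> fmap (u1 + J u2) = (pi u2, pi u1).
Proof.
move=> H1 H2; have [D1 D2 DE] := decP (u1 + J u2).
have [E1 E2] := wd D1 D2 H1 H2 (esym DE).
by rewrite /fmap E1 E2.
Qed.

Lemma main_sec :
  exists (A : vectType R) (m : A -> A -> A) (f : V -> A * A),
    is_comm_assoc_product m /\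
    [/\ (forall (a : R) (x y : V), f (a *: x + y) = a *: f x + f y),
        (forall p : A * A, exists x, f x = p),
        (forall x, f x = 0 <-> in_center br x),
        (forall x y, f (br x y) = aff_bracket m (f x) (f y)) &
        (forall x, f (J x) = J_aff (f x))].
Proof.
exists (subvs_of W), mA, fmap.
split.
  split; [exact: mA_bil | exact: mA_comm | exact: mA_assoc].
split.
- move=> a x y.
  have [x1 x2 ->] := decP x; have [y1 y2 ->] := decP y.
  have -> : a *: ((dec x).1 + J (dec x).2) + ((dec y).1 + J (dec y).2)
     = (a *: (dec x).1 + (dec y).1) + J (a *: (dec x).2 + (dec y).2).
    by rewrite linearP scalerDr addrACA.
  rewrite !fE ?memvD ?memvZ //.
  by rewrite /= !linearP.
- move=> [a b]; exists (vsval b + J (vsval a)).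
  by rewrite fE ?W_U // !pi_val.
- move=> x; have [x1 x2 ->] := decP x; rewrite fE //; split.
    case=> /(pi0K x2) /memK [_ c2] /(pi0K x1) /memK [_ c1].
    by move=> y; rewrite brDl c1 (centralJ c2) addr0.
  move/(central_dec x1 x2) => [c1 c2].
  by rewrite !piK //; apply/memK.
- move=> x y; have [x1 x2 ->] := decP x; have [y1 y2 ->] := decP y.
  set u1 := (dec x).1 in x1 *; set u2 := (dec x).2 in x2 *.
  set v1 := (dec y).1 in y1 *; set v2 := (dec y).2 in y2 *.
  have -> : br (u1 + J u2) (v1 + J v2) = (br (J u2) v1 - br (J v2) u1) + J 0.
    rewrite linear0 addr0 brDl !linearD /= brJJ (UU x1 y1) (UU x2 y2).
    by rewrite add0r addr0 addrC (skew u1) (comm_dot v2).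
  rewrite fE ?mem0v ?memvB ?Uid // !fE //.
  by rewrite /aff_bracket /= linear0 linearB !mA_pi.
- move=> x; have [x1 x2 ->] := decP x.
  have x2' : - (dec x).2 \in U by rewrite memvN.
  rewrite linearD /= JJ addrC -linearN /= (fE x2' x1) fE //.
  by rewrite /J_aff /= linearN.
Qed.

End Main.

Unset Implicit Arguments.

Theorem mainTheorem2 (R : realType) (V : vectType R) (br : V -> V -> V)
  (J : V -> V) (U : {vspace V}) :
  is_lie_bracket br ->
  lie_solvable br ->
  abelian_complex_structure br J ->
  abelian_ideal br U ->
  (forall x : V, exists2 u1, u1 \in U & exists2 u2, u2 \in U & x = u1 + J u2) ->
  exists (A : vectType R) (m : A -> A -> A) (f : V -> A * A),
    is_comm_assoc_product m /\
    [/\ (forall (a : R) (x y : V), f (a *: x + y) = a *: f x + f y),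
        (forall p : A * A, exists x, f x = p),
        (forall x, f x = 0 <-> in_center br x),
        (forall x y, f (br x y) = aff_bracket m (f x) (f y)) &
        (forall x, f (J x) = J_aff (f x))].
Proof.
move=> H1 _ H2 H3 H4; exact: (@main_sec R V br J U H1 H2 H3 H4).
Qed.
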